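(* Let $D$ be an $n\times n$ spherical Euclidean distance matrix (EDM), generated by points $p^1,\dots,p^n\in\mathbb{R}^r$ whose affine span is $\mathbb{R}^r$ (so $r$ is the embedding dimension of $D$) and which lie on a hypersphere in $\mathbb{R}^r$ of radius $\rho$. Then \[ \rho^2 = \frac{e^T D e}{2n^2} + \frac{e^T D\, (\mathcal{T}(D))^{\dagger} D e}{4n^2}, \] where $e\in\mathbb{R}^n$ is the all-ones vector, $\mathcal{T}(D) = -\tfrac12 JDJ$ with $J = I_n - \tfrac1n ee^T$, and $A^\dagger$ denotes the Moore–Penrose inverse of $A$.
   Context: An $n\times n$ matrix $D=(d_{ij})$ is a Euclidean distance matrix (EDM) if there exist points $p^1,\dots,p^n$ in some Euclidean space with $d_{ij}=\|p^i-p^j\|^2$ for all $i,j$; the dimension of the affine span of these points is the embedding dimension of $D$. An EDM is spherical if the points generating it lie on a hypersphere. *)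

(* Defs.v *)
From HB Require Import structures.
From mathcomp Require Import all_boot all_order all_algebra.
Set Implicit Arguments. Unset Strict Implicit. Unset Printing Implicit Defensive.
Import Order.TTheory GRing.Theory Num.Theory.
Local Open Scope ring_scope.

Section Defs.
Variable R : realFieldType.

Definition sqnorm (r : nat) (v : 'rV[R]_r) : R := \sum_(k < r) v 0 k ^+ 2.

Definition edm (n r : nat) (p : 'I_n -> 'rV[R]_r) : 'M[R]_n :=
  \matrix_(i, j) sqnorm (p i - p j).

(* affine span of the points is all of R^r: the linear span of the
   differences p_i - p_j is the whole space *)
Definition affine_span_full (n r : nat) (p : 'I_n -> 'rV[R]_r) : bool :=
  ((\sum_(i < n) \sum_(j < n) <<p i - p j>>)%MS == 1%:M)%MS.

Definition on_sphere (n r : nat) (p : 'I_n -> 'rV[R]_r) (rho : R) : Prop :=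
  exists c : 'rV[R]_r, forall i, sqnorm (p i - c) = rho ^+ 2.

Definition ones (n : nat) : 'cV[R]_n := const_mx 1.

Definition Jproj (n : nat) : 'M[R]_n :=
  1%:M - (n%:R)^-1 *: (ones n *m (ones n)^T).

Definition Tmap (n : nat) (D : 'M[R]_n) : 'M[R]_n :=
  - (2^-1) *: (Jproj n *m D *m Jproj n).

Definition is_MP_inverse (m k : nat) (A : 'M[R]_(m, k)) (X : 'M[R]_(k, m)) : Prop :=
  [/\ A *m X *m A = A, X *m A *m X = X,
      (A *m X)^T = A *m X & (X *m A)^T = X *m A].

End Defs.

(* Main.v *)
Require Import Defs.
From HB Require Import structures.
From mathcomp Require Import all_boot all_order all_algebra.
From mathcomp Require Import ring.
Import Order.TTheory GRing.Theory Num.Theory.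
Local Open Scope ring_scope.

Lemma sqnorm_exp (R : realFieldType) r (u v w : 'rV[R]_r) :
  sqnorm (u - v) = sqnorm (u - w) + sqnorm (v - w)
     - 2 * \sum_(k < r) (u - w) 0 k * (v - w) 0 k.
Proof.
rewrite /sqnorm mulr_sumr -sumrN -!big_split /=.
by apply: eq_bigr => k _; rewrite !mxE; ring.
Qed.

Lemma scaleAr' (R : realFieldType) m n k a (A : 'M[R]_(m,n)) (B : 'M_(n,k)) :
  A *m (a *: B) = a *: (A *m B).
Proof. by rewrite scalemxAr. Qed.

Lemma half2 (R : realFieldType) m k (M : 'M[R]_(m,k)) : - 2^-1 *: (0 - 2 *: M) = M.
Proof.
by rewrite sub0r scalerN scaleNr opprK scalerA mulVf ?scale1r // pnatr_eq0.
Qed.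

Theorem lemma4 (R : realFieldType) (n r : nat) (p : 'I_n -> 'rV[R]_r) (rho : R)
  (X : 'M[R]_n) :
  (0 < n)%N ->
  affine_span_full p ->
  0 <= rho ->
  on_sphere p rho ->
  is_MP_inverse (Tmap (edm p)) X ->
  rho ^+ 2 =
    ((ones R n)^T *m edm p *m ones R n) 0 0 / (2 * (n%:R) ^+ 2)
  + ((ones R n)^T *m edm p *m X *m edm p *m ones R n) 0 0 / (4 * (n%:R) ^+ 2).
Proof.
move=> n0 haff _ [c hc] [mp1 mp2 mp3 mp4].
set e := ones R n.
set N : R := n%:R.
have N0 : N != 0 by rewrite /N pnatr_eq0 -lt0n.
set Q : 'M[R]_(n, r) := \matrix_i (p i - c).
set a : R := 2 * rho ^+ 2.
have hD : edm p = a *: (e *m e^T) - 2 *: (Q *m Q^T).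
  apply/matrixP => i j; rewrite !mxE /e /ones.
  rewrite big_ord1 !mxE mulr1.
  have -> : \sum_j0 Q i j0 * Q^T j0 j = \sum_(k < r) (p i - c) 0 k * (p j - c) 0 k.
    by apply: eq_bigr => k _; rewrite !mxE.
  rewrite /a mulr1 (@sqnorm_exp _ _ _ _ c) !hc; ring.
have ete : e^T *m e = N%:M.
  apply/matrixP => i j; rewrite !mxE !ord1 eqxx mulr1n.
  under eq_bigr do rewrite !mxE mulr1.
  by rewrite sumr_const card_ord.
set J := Jproj R n.
have Je : J *m e = 0.
  by rewrite /J /Jproj mulmxBl mul1mx -scalemxAl -mulmxA ete mul_mx_scalar
    scalerA mulVf // scale1r subrr.
have trJ : J^T = J.
  by rewrite /J /Jproj linearB /= trmx1 linearZ /= trmx_mul trmxK.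
have hT0 : Tmap (edm p) = - 2^-1 *: (J *m edm p *m J) by [].
have hJB : J *m Q = Q - N^-1 *: (e *m (e^T *m Q)).
  by rewrite /J /Jproj mulmxBl mul1mx -scalemxAl mulmxA.
clearbody J.
set B := J *m Q.
have hT : Tmap (edm p) = B *m B^T.
  rewrite hT0 hD mulmxBr mulmxBl !scaleAr' -!scalemxAl !mulmxA. rewrite [J *m e]Je !mul0mx [a *: _]scaler0.
  by rewrite /B trmx_mul trJ !mulmxA; exact: half2.
set A := Tmap (edm p).
have trA : A^T = A by rewrite /A hT trmx_mul trmxK.
have Ae : A *m e = 0.
  by rewrite /A hT /B -mulmxA trmx_mul trJ -(mulmxA _ J) Je !mulmx0.
have eA : e^T *m A = 0 by rewrite -{1}trA -trmx_mul Ae trmx0.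
have hX1 : X = X *m X^T *m A.
  by rewrite -{1}mp2 -mulmxA -mp3 trmx_mul trA mulmxA.
have Xe : X *m e = 0 by rewrite hX1 -mulmxA Ae mulmx0.
have hX2 : X = A *m X^T *m X.
  by rewrite -{1}mp2 -mp4 trmx_mul trA.
have eX : e^T *m X = 0 by rewrite hX2 !mulmxA eA !mul0mx.
have he1 : forall i, delta_mx 0 i *m e = 1%:M.
  move=> i; rewrite -rowE; apply/matrixP => x y; rewrite !mxE !ord1 eqxx /=.
  by rewrite mulr1n.
have hrow : forall i j, p i - p j = (delta_mx 0 i - delta_mx 0 j) *m B.
  move=> i j; rewrite /B hJB mulmxBl !mulmxBr !scaleAr' !mulmxA !he1 !mul1mx.
  rewrite -!rowE !rowK.
  by rewrite opprB addrA subrK opprB addrA subrK.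
have fullB : row_full B.
  rewrite -sub1mx; move/andP: haff => [_ h1]; apply: submx_trans h1 _.
  apply/sumsmx_subP => i _; apply/sumsmx_subP => j _.
  by rewrite genmxE hrow submxMl.
have eJ : e^T *m J = 0 by rewrite -trJ -trmx_mul Je trmx0.
have eB : e^T *m B = 0 by rewrite /B mulmxA eJ mul0mx.
have hB : B = Q - N^-1 *: (e *m (e^T *m Q)) by [].
clearbody B.
have [C hCB] := row_fullP fullB.
have hBC : B^T *m C^T = 1%:M by rewrite -trmx_mul hCB trmx1.
have hM : B^T *m X *m B = 1%:M.
  have := congr1 (fun Y => C *m Y *m C^T) mp1; rewrite /= /A hT.
  rewrite !mulmxA hCB !mul1mx -mulmxA hBC mulmx1; apply.
set s := Q^T *m e.
have eQ : e^T *m Q = s^T by rewrite /s trmx_mul trmxK.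
have hQ : Q = B + N^-1 *: (e *m s^T) by rewrite hB eQ subrK.
set ss := (s^T *m s) 0 0.
have hsts : s^T *m s = ss%:M := mx11_scalar _.
have hQs : Q *m s = B *m s + (N^-1 * ss) *: e.
  by rewrite {1}hQ mulmxDl -scalemxAl -mulmxA hsts mul_mx_scalar scalerA.
have hDe : edm p *m e = (a * N - 2 * (N^-1 * ss)) *: e - 2 *: (B *m s).
  rewrite hD mulmxBl -!scalemxAl -!mulmxA ete -/s hQs mul_mx_scalar.
  move: (B *m s) => v; apply/matrixP => i j; rewrite !mxE; ring.
have trD : (edm p)^T = edm p by rewrite hD linearB /= !linearZ /= !trmx_mul !trmxK.
have heD : e^T *m edm p = (edm p *m e)^T by rewrite trmx_mul trD.
have h1 : e^T *m edm p *m e = (a * N * N - 2 * ss)%:M.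
  rewrite -mulmxA hDe mulmxBr !scaleAr' ete [e^T *m (B *m s)]mulmxA eB mul0mx.
  apply/matrixP => i j; rewrite !mxE !ord1 eqxx /= !mulr1n; field; exact: N0.
have hM' : s^T *m B^T *m X *m B *m s = ss%:M.
  by rewrite -!mulmxA (mulmxA X) (mulmxA B^T) (mulmxA B^T X) hM mul1mx hsts.
have h2 : e^T *m edm p *m X *m edm p *m e = (4 * ss)%:M.
  have hDeT : (edm p *m e)^T = (a * N - 2 * (N^-1 * ss)) *: e^T - 2 *: (s^T *m B^T).
    by rewrite hDe linearB /= !linearZ /= trmx_mul.
  rewrite heD hDeT -mulmxA hDe.
  rewrite mulmxBl -!scalemxAl eX [_ *: 0]scaler0 sub0r mulNmx -scalemxAl mulmxBr.
  rewrite !scaleAr' -[s^T *m B^T *m X *m e]mulmxA Xe mulmx0 [_ *: 0]scaler0 sub0r.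
  rewrite [s^T *m B^T *m X *m (B *m s)]mulmxA hM'.
  apply/matrixP => i j; rewrite !mxE !ord1 eqxx /= !mulr1n; ring.
rewrite h1 h2 !mxE eqxx /= !mulr1n /a.
by field; exact: N0.
Qed.
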